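(* Let $X$ be a continuum that is $d(X)$-Baire. Then every nest (family totally ordered by inclusion) of open dense subsets of $X$ has dense intersection.
   Context: A continuum is a nondegenerate compact connected Hausdorff space. $d(X)$ is the least cardinality of a dense subset of $X$; $X$ is $\alpha$-Baire if every family of $\alpha$ many open dense subsets of $X$ has dense intersection. *)

(* Defs.v *)
From HB Require Import structures.
From mathcomp Require Import all_boot all_order.
From mathcomp Require Import all_classical all_reals topology.
Set Implicit Arguments. Unset Strict Implicit. Unset Printing Implicit Defensive.
Local Open Scope classical_set_scope.
Local Open Scope card_scope.

Definition continuum (T : topologicalType) : Prop :=
  [/\ compact [set: T], connected [set: T], hausdorff_space T
    & exists x y : T, x <> y].

(* D is a dense set of least cardinality, so that #|D| = d(X). *)
Definition min_dense_set (T : topologicalType) (D : set T) : Prop :=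
  dense D /\ forall E : set T, dense E -> D #<= E.

(* X is kappa-Baire, with kappa = #|K|: every family of (at most) kappa many
   open dense subsets has dense intersection. *)
Definition card_Baire (T : topologicalType) (U : Type) (K : set U) : Prop :=
  forall F : set (set T), F #<= K ->
    (forall A, F A -> open A /\ dense A) ->
    dense (\bigcap_(A in F) A).

Definition density_Baire (T : topologicalType) : Prop :=
  exists D : set T, min_dense_set D /\ card_Baire T D.

Definition nest (T : Type) (N : set (set T)) : Prop :=
  forall A B, N A -> N B -> A `<=` B \/ B `<=` A.

(* Main.v *)
Require Import Defs.
From HB Require Import structures.
From mathcomp Require Import all_boot all_order.
From mathcomp Require Import all_classical all_reals topology.
Local Open Scope classical_set_scope.
Local Open Scope card_scope.

Theorem mainTheorem6 (T : topologicalType) :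
  continuum T -> density_Baire T ->
  forall N : set (set T), nest N ->
    (forall A, N A -> open A /\ dense A) ->
    dense (\bigcap_(A in N) A).
Proof.
move=> _ [D [[Dd _] DB]] N nN hN O O0 Oo.
apply/set0P/negP => /eqP HO.
have H : forall d, exists A : set T, O d -> N A /\ ~ A d.
  move=> d; case: (pselect (O d)) => Od; last by exists set0.
  have : ~ (\bigcap_(A in N) A) d.
    by move=> hd; have : (O `&` \bigcap_(A in N) A) d by []; rewrite HO.
  move=> /existsNP[A /not_implyP[NA nAd]]; by exists A.
have [g hg] := choice H.
set F := g @` (O `&` D).
have FD : F #<= D.
  apply: card_le_trans (card_image_le _ _) _.
  exact: subset_card_le (@subIsetr _ _ _).
have FN : forall A, F A -> open A /\ dense A.
  by move=> A [d [Od _] <-]; apply: hN; case: (hg d Od).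
have [x [Ox Fx]] := DB F FD FN O O0 Oo.
have : ~ (\bigcap_(A in N) A) x.
  by move=> hx; have : (O `&` \bigcap_(A in N) A) x by []; rewrite HO.
move=> /existsNP[B /not_implyP[NB nBx]].
have [Bo Bd] := hN B NB.
have [y [[Oy By] Dy]] : (O `&` B) `&` D !=set0.
  apply: Dd; last exact: openI.
  by have := Bd O O0 Oo.
have [Ng nd] := hg y Oy.
case: (nN _ _ Ng NB) => sub.
- by apply: nBx; apply: sub; apply: Fx; exists y.
- by apply: nd; apply: sub.
Qed.
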